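(* Let $A,B\in\mathbb{R}^{3\times 3}$ form a bimatrix game satisfying Assumptions 1 and 3 below, and suppose $(A,B)$ is zero-sum (in the sense defined below). A transition diagram $D$ is combinatorially equivalent to the transition diagram of such a game if and only if $D$ satisfies the following five conditions: (1) No row of $D$ has three horizontal arrows pointing in the same direction and no column has three vertical arrows pointing in the same direction; (2) No three horizontal arrows between two columns point in the same direction and no three vertical arrows between two rows point in the same direction; (3) $D$ has no sinks; (4) $D$ has no sources; (5) $D$ has no alternating cycles. Moreover, up to combinatorial equivalence there are exactly 23 transition diagrams satisfying (1)–(5).
   Context: Let $\Sigma_A$ be the set of probability row vectors and $\Sigma_B$ the set of probability column vectors in $\mathbb{R}^3$. For a bimatrix game $(A,B)$ with $A=(a_{ij})$, $B=(b_{ij})$, define $\mathrm{BR}_A(q)=\operatorname{argmax}_{p\in\Sigma_A} pAq$ and $\mathrm{BR}_B(p)=\operatorname{argmax}_{q\in\Sigma_B} pBq$. A Nash equilibrium is a point $(\bar p,\bar q)\in\Sigma_A\times\Sigma_B$ with $\bar p\in \mathrm{BR}_A(\bar q)$ and $\bar q\in\mathrm{BR}_B(\bar p)$. Assumption 1 (non-degeneracy): $a_{ij}\neq a_{i'j}$ and $b_{ij}\neq b_{ij'}$ for all $i\neq i'$, $j\neq j'$. Assumption 3: the game has a unique Nash equilibrium, and it lies in the interior of $\Sigma_A\times\Sigma_B$. Two games $(A,B)$, $(C,D)$ are linearly equivalent if there are $e>0$, $g>0$, $f_j,h_i\in\mathbb{R}$ with $c_{ij}=e a_{ij}+f_j$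 and $d_{ij}=g b_{ij}+h_i$. A game is called zero-sum if it is linearly equivalent to a game $(C,D)$ with $C+D=0$. A transition diagram is a relation $\to$ on the nine cells $(i,j)$, $i,j\in\{1,2,3\}$, such that for every $j$ and every $i\neq i'$ exactly one of $(i,j)\to(i',j)$, $(i',j)\to(i,j)$ holds (vertical arrows), for every $i$ and every $j\neq j'$ exactly one of $(i,j)\to(i,j')$, $(i,j')\to(i,j)$ holds (horizontal arrows), and no other pairs are related. The transition diagram of a game $(A,B)$ satisfying Assumption 1 is given by $(i,j)\to(i',j)$ iff $a_{i'j}>a_{ij}$ and $(i,j)\to(i,j')$ iff $b_{ij'}>b_{ij}$. Condition (1) formally: for no $i$ and no ordering $\{j_1,j_2,j_3\}=\{1,2,3\}$ do we have $(i,j_1)\to(i,j_2)\to(i,j_3)\to(i,j_1)$; and for no $j$ and ordering $\{i_1,i_2,i_3\}=\{1,2,3\}$ do we have $(i_1,j)\to(i_2,j)\to(i_3,j)\to(i_1,j)$. Condition (2) formally: there are no $i\neq i'$ with $(i,j)\to(i',j)$ for all $j$, and no $j\neq j'$ with $(i,j)\to(i,j')$ for all $i$. A cell $(i,j)$ is a sink if $(i',j)\to(i,j)$ and $(i,j')\to(i,j)$ for all $i'\neq i$, $j'\neq j$; it is a source if $(i,j)\to(i',j)$ and $(i,j)\to(i,j')$ for all $i'\ne i$, $j'\ne j$. An alternating cycle is a sequence $(i_0,j_0),(i_1,j_1),\dots,(i_n,j_n)=(i_0,j_0)$ of cells, consecutive ones differing in exactly one coordinate, such that either (a) $(i_k,j_k)\to(i_{k+1},j_{k+1})$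 whenever $i_k\neq i_{k+1}$ and $(i_{k+1},j_{k+1})\to(i_k,j_k)$ whenever $j_k\neq j_{k+1}$, or (b) $(i_{k+1},j_{k+1})\to(i_k,j_k)$ whenever $i_k\neq i_{k+1}$ and $(i_k,j_k)\to(i_{k+1},j_{k+1})$ whenever $j_k\neq j_{k+1}$ (i.e. it becomes a directed loop after reversing all vertical or all horizontal arrows). Two transition diagrams $D_1,D_2$ are combinatorially equivalent if $D_2$ is obtained from $D_1$ by a permutation of rows, a permutation of columns, and possibly transposition (the transpose $D^T$ has $(j,i)\to(j',i')$ iff $(i,j)\to(i',j')$ in $D$). For games, this corresponds to $(A,B)$ versus $(PCQ,PDQ)$ or $(B',A')$ versus $(PCQ,PDQ)$ with $P,Q$ permutation matrices. *)

(* Defs.v *)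
From HB Require Import structures.
From mathcomp Require Import all_boot all_order fingroup perm all_algebra.
From mathcomp Require Import reals.
Set Implicit Arguments. Unset Strict Implicit. Unset Printing Implicit Defensive.
Import Order.TTheory GRing.Theory Num.Theory.
Local Open Scope ring_scope.

Section Games.
Variable R : realType.

Definition probRow (p : 'rV[R]_3) : Prop :=
  (forall j, 0 <= p 0 j) /\ \sum_j p 0 j = 1.
Definition probCol (q : 'cV[R]_3) : Prop :=
  (forall i, 0 <= q i 0) /\ \sum_i q i 0 = 1.

Definition payoff (p : 'rV[R]_3) (M : 'M[R]_3) (q : 'cV[R]_3) : R :=
  (p *m M *m q) 0 0.

Definition BR_A (A : 'M[R]_3) (q : 'cV[R]_3) (p : 'rV[R]_3) : Prop :=
  probRow p /\ forall p', probRow p' -> payoff p' A q <= payoff p A q.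
Definition BR_B (B : 'M[R]_3) (p : 'rV[R]_3) (q : 'cV[R]_3) : Prop :=
  probCol q /\ forall q', probCol q' -> payoff p B q' <= payoff p B q.

Definition nash (A B : 'M[R]_3) (p : 'rV[R]_3) (q : 'cV[R]_3) : Prop :=
  probRow p /\ probCol q /\ BR_A A q p /\ BR_B B p q.

Definition assumption1 (A B : 'M[R]_3) : Prop :=
  (forall i i' j, i != i' -> A i j != A i' j) /\
  (forall i j j', j != j' -> B i j != B i j').

Definition assumption3 (A B : 'M[R]_3) : Prop :=
  exists p q, [/\ nash A B p q,
    (forall j, 0 < p 0 j), (forall i, 0 < q i 0) &
    (forall p' q', nash A B p' q' -> p' = p /\ q' = q)].

(* (A,B) is linearly equivalent to a game (C,D) with C + D = 0 *)
Definition zero_sum (A B : 'M[R]_3) : Prop :=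
  exists (e g : R) (f h : 'I_3 -> R), [/\ 0 < e, 0 < g &
    forall i j, (e * A i j + f j) + (g * B i j + h i) = 0].

End Games.

Definition cell := ('I_3 * 'I_3)%type.   (* (row i, column j) *)
Definition diagram := {set cell * cell}.

Definition arrow (D : diagram) (c c' : cell) : bool := (c, c') \in D.

Definition is_diagram (D : diagram) : Prop :=
  (forall j i i', i != i' -> arrow D (i, j) (i', j) != arrow D (i', j) (i, j)) /\
  (forall i j j', j != j' -> arrow D (i, j) (i, j') != arrow D (i, j') (i, j)) /\
  (forall c c', arrow D c c' -> (c.1 == c'.1) != (c.2 == c'.2)).

Definition game_diagram (R : realType) (A B : 'M[R]_3) : diagram :=
  [set x : cell * cell |
     ((x.1.2 == x.2.2) && (A x.1.1 x.1.2 < A x.2.1 x.2.2)) ||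
     ((x.1.1 == x.2.1) && (B x.1.1 x.1.2 < B x.2.1 x.2.2))].

Definition cond1 (D : diagram) : Prop :=
  (forall i j1 j2 j3, j1 != j2 -> j2 != j3 -> j1 != j3 ->
     ~ [/\ arrow D (i, j1) (i, j2), arrow D (i, j2) (i, j3) & arrow D (i, j3) (i, j1)]) /\
  (forall j i1 i2 i3, i1 != i2 -> i2 != i3 -> i1 != i3 ->
     ~ [/\ arrow D (i1, j) (i2, j), arrow D (i2, j) (i3, j) & arrow D (i3, j) (i1, j)]).

Definition cond2 (D : diagram) : Prop :=
  (forall i i', i != i' -> ~ (forall j, arrow D (i, j) (i', j))) /\
  (forall j j', j != j' -> ~ (forall i, arrow D (i, j) (i, j'))).

Definition is_sink (D : diagram) (c : cell) : Prop :=
  (forall i', i' != c.1 -> arrow D (i', c.2) c) /\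
  (forall j', j' != c.2 -> arrow D (c.1, j') c).
Definition is_source (D : diagram) (c : cell) : Prop :=
  (forall i', i' != c.1 -> arrow D c (i', c.2)) /\
  (forall j', j' != c.2 -> arrow D c (c.1, j')).

Definition no_sink (D : diagram) : Prop := forall c, ~ is_sink D c.
Definition no_source (D : diagram) : Prop := forall c, ~ is_source D c.

Definition stepA (D : diagram) (c c' : cell) : bool :=
  ((c.1 != c'.1) && (c.2 == c'.2) && arrow D c c') ||
  ((c.1 == c'.1) && (c.2 != c'.2) && arrow D c' c).
Definition stepB (D : diagram) (c c' : cell) : bool :=
  ((c.1 != c'.1) && (c.2 == c'.2) && arrow D c' c) ||
  ((c.1 == c'.1) && (c.2 != c'.2) && arrow D c c').

Definition alternating_cycle (D : diagram) (s : seq cell) : Prop :=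
  s != [::] /\ (path.cycle (stepA D) s \/ path.cycle (stepB D) s).

Definition no_alt_cycle (D : diagram) : Prop := forall s, ~ alternating_cycle D s.

Definition good (D : diagram) : Prop :=
  [/\ cond1 D, cond2 D, no_sink D, no_source D & no_alt_cycle D].

Definition cell_map (s t : 'S_3) (b : bool) (c : cell) : cell :=
  if b then (t c.2, s c.1) else (s c.1, t c.2).

Definition comb_equiv (D1 D2 : diagram) : Prop :=
  exists (s t : 'S_3) (b : bool), forall c c',
    arrow D2 (cell_map s t b c) (cell_map s t b c') = arrow D1 c c'.

(* Main.v *)
Require Import Defs.
From mathcomp Require Import all_boot all_order fingroup perm all_algebra.
From mathcomp Require Import reals.
From mathcomp Require Import ring lra.
From Stdlib Require Import FunctionalExtensionality.
Set Implicit Arguments. Unset Strict Implicit. Unset Printing Implicit Defensive.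

Module CombPart.

Definition o0 : 'I_3 := @Ordinal 3 0 isT.
Definition o1 : 'I_3 := @Ordinal 3 1 isT.
Definition o2 : 'I_3 := @Ordinal 3 2 isT.
Definition ords : seq 'I_3 := [:: o0; o1; o2].
Definition cells : seq cell := [seq (i, j) | i <- ords, j <- ords].

Fixpoint alls {T} (p : T -> bool) (s : seq T) : bool :=
  if s is x :: s' then (if p x then alls p s' else false) else true.
Fixpoint hass {T} (p : T -> bool) (s : seq T) : bool :=
  if s is x :: s' then (if p x then true else hass p s') else false.
Notation "'ALL' x 'in' s , b" := (alls (fun x => b) s) (at level 200, x binder).
Notation "'ANY' x 'in' s , b" := (hass (fun x => b) s) (at level 200, x binder).
Notation "a &&& b" := (if a then b else false) (at level 57, right associativity).
Notation "a ||| b" := (if a then true else b) (at level 58, right associativity).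
Notation "a ==>> b" := (if a then b else true) (at level 59, right associativity).
Notation "i =n j" := (nat_of_ord i == nat_of_ord j) (at level 70).
Notation "i <>n j" := (nat_of_ord i != nat_of_ord j) (at level 70).

Section B.
Variable arr : cell -> cell -> bool.
Definition cond1b :=
  (ALL i in ords, ALL j1 in ords, ALL j2 in ords, ALL j3 in ords,
     (j1 <>n j2) ==>> (j2 <>n j3) ==>> (j1 <>n j3) ==>>
     ~~ (arr (i, j1) (i, j2) &&& arr (i, j2) (i, j3) &&& arr (i, j3) (i, j1)))
  &&& (ALL j in ords, ALL i1 in ords, ALL i2 in ords, ALL i3 in ords,
     (i1 <>n i2) ==>> (i2 <>n i3) ==>> (i1 <>n i3) ==>>
     ~~ (arr (i1, j) (i2, j) &&& arr (i2, j) (i3, j) &&& arr (i3, j) (i1, j))).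
Definition cond2b :=
  (ALL i in ords, ALL i' in ords, (i <>n i') ==>> ~~ (ALL j in ords, arr (i, j) (i', j)))
  &&&   (ALL j in ords, ALL j' in ords, (j <>n j') ==>> ~~ (ALL i in ords, arr (i, j) (i, j'))).
Definition no_sinkb :=
  ALL c in cells, ~~ ((ALL i' in ords, (i' <>n c.1) ==>> arr (i', c.2) c) &&&
                      (ALL j' in ords, (j' <>n c.2) ==>> arr (c.1, j') c)).
Definition no_sourceb :=
  ALL c in cells, ~~ ((ALL i' in ords, (i' <>n c.1) ==>> arr c (i', c.2)) &&&
                      (ALL j' in ords, (j' <>n c.2) ==>> arr c (c.1, j'))).
Definition stepAn (c c' : cell) : bool :=
  (((c.1 <>n c'.1) &&& (c.2 =n c'.2)) &&& arr c c') |||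
  (((c.1 =n c'.1) &&& (c.2 <>n c'.2)) &&& arr c' c).
Definition stepBn (c c' : cell) : bool :=
  (((c.1 <>n c'.1) &&& (c.2 =n c'.2)) &&& arr c' c) |||
  (((c.1 =n c'.1) &&& (c.2 <>n c'.2)) &&& arr c c').
End B.

(* walks of length <= n+1 from y to x *)
Fixpoint wk (e : cell -> cell -> bool) (n : nat) (x y : cell) : bool :=
  if n is n'.+1 then e y x ||| ANY z in cells, e y z &&& wk e n' x z else e y x.
Definition short_cyc e := ANY x in cells, wk e 5 x x.

Definition ceq (c c' : cell) := (c.1 =n c'.1) &&& (c.2 =n c'.2).
Fixpoint pickc (e : cell -> cell -> bool) (S0 S : seq cell) : option cell :=
  if S is x :: r then (if ANY y in S0, e y x then pickc e S0 r else Some x) else None.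
Fixpoint elim (e : cell -> cell -> bool) (n : nat) (S : seq cell) : bool :=
  if S is [::] then true else
  if n is n'.+1 then
    (if pickc e S S is Some x then elim e n' [seq y <- S | ~~ ceq y x] else false)
  else false.

Definition goodw (arr : cell -> cell -> bool) :=
  cond2b arr &&& no_sinkb arr &&& no_sourceb arr &&& cond1b arr &&&
      ~~ short_cyc (stepAn arr) &&& ~~ short_cyc (stepBn arr).
Definition goodc (arr : cell -> cell -> bool) :=
  cond1b arr &&& cond2b arr &&& no_sinkb arr &&& no_sourceb arr &&&
      elim (stepAn arr) 9 cells &&& elim (stepBn arr) 9 cells.

Definition dec (x : seq bool) (c c' : cell) : bool :=
  let i := nat_of_ord c.1 in let j := nat_of_ord c.2 in
  let i' := nat_of_ord c'.1 in let j' := nat_of_ord c'.2 in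
  if j == j' then
    (if i < i' then nth false x (3 * j + (i + i').-1)
     else if i' < i then ~~ nth false x (3 * j + (i + i').-1) else false)
  else if i == i' then
    (if j < j' then nth false x (9 + 3 * i + (j + j').-1)
     else if j' < j then ~~ nth false x (9 + 3 * i + (j + j').-1) else false)
  else false.

Fixpoint allb (n : nat) (P : seq bool -> bool) : bool :=
  if n is n'.+1 then allb n' (fun l => P (true :: l)) &&& allb n' (fun l => P (false :: l))
  else P [::].
Fixpoint countb (n : nat) (P : seq bool -> bool) : nat :=
  if n is n'.+1 then countb n' (fun l => P (true :: l)) + countb n' (fun l => P (false :: l))
  else P [::].

Definition pairs : seq (cell * cell) :=
  [:: ((o0,o0),(o1,o0)); ((o0,o0),(o2,o0)); ((o1,o0),(o2,o0));
      ((o0,o1),(o1,o1)); ((o0,o1),(o2,o1)); ((o1,o1),(o2,o1));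
      ((o0,o2),(o1,o2)); ((o0,o2),(o2,o2)); ((o1,o2),(o2,o2));
      ((o0,o0),(o0,o1)); ((o0,o0),(o0,o2)); ((o0,o1),(o0,o2));
      ((o1,o0),(o1,o1)); ((o1,o0),(o1,o2)); ((o1,o1),(o1,o2));
      ((o2,o0),(o2,o1)); ((o2,o0),(o2,o2)); ((o2,o1),(o2,o2))].
Definition code (arr : cell -> cell -> bool) : seq bool := [seq arr p.1 p.2 | p <- pairs].
Definition mkD (x : seq bool) : diagram := [set p : cell * cell | dec x p.1 p.2].

Definition isdf (arr : cell -> cell -> bool) : Prop :=
  (forall j i i', i != i' -> arr (i, j) (i', j) != arr (i', j) (i, j)) /\
  (forall i j j', j != j' -> arr (i, j) (i, j') != arr (i, j') (i, j)) /\
  (forall c c', arr c c' -> (c.1 == c'.1) != (c.2 == c'.2)).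

Definition tabs : seq (seq 'I_3) := [:: [::o0;o1;o2]; [::o0;o2;o1]; [::o1;o0;o2]; [::o1;o2;o0]; [::o2;o0;o1]; [::o2;o1;o0]].
Definition pf (l : seq 'I_3) (i : 'I_3) : 'I_3 := nth o0 l i.
Definition cmapf (f g : 'I_3 -> 'I_3) (b : bool) (c : cell) : cell :=
  if b then (g c.2, f c.1) else (f c.1, g c.2).
Definition beq (a b : bool) := if a then b else ~~ b.
Definition equivb (r x : seq bool) l1 l2 b :=
  ALL c in cells, ALL c' in cells,
    beq (dec r (cmapf (pf l1) (pf l2) b c) (cmapf (pf l1) (pf l2) b c')) (dec x c c').
Definition natM (L : seq (seq nat)) (i j : 'I_3) : nat := nth 0 (nth [::] L i) j.
Definition natdiag (L : seq (seq nat)) (c c' : cell) : bool :=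
  ((c.2 =n c'.2) &&& (natM L c.1 c.2 < natM L c'.1 c'.2)) |||
  ((c.1 =n c'.1) &&& (natM L c'.1 c'.2 < natM L c.1 c.2)).
Definition games : seq (seq (seq nat)) := [::
  [:: [:: 9; 6; 2]; [:: 1; 5; 8]; [:: 3; 4; 7]];
  [:: [:: 7; 5; 2]; [:: 1; 6; 9]; [:: 3; 4; 8]];
  [:: [:: 6; 3; 1]; [:: 2; 8; 9]; [:: 4; 5; 7]];
  [:: [:: 9; 6; 2]; [:: 3; 4; 8]; [:: 1; 5; 7]];
  [:: [:: 8; 5; 2]; [:: 3; 4; 9]; [:: 1; 6; 7]];
  [:: [:: 8; 5; 1]; [:: 2; 4; 9]; [:: 3; 6; 7]];
  [:: [:: 6; 4; 3]; [:: 2; 5; 9]; [:: 1; 7; 8]];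
  [:: [:: 8; 4; 1]; [:: 2; 5; 9]; [:: 3; 6; 7]];
  [:: [:: 6; 7; 2]; [:: 4; 1; 9]; [:: 3; 5; 8]];
  [:: [:: 5; 7; 1]; [:: 6; 3; 9]; [:: 2; 4; 8]];
  [:: [:: 5; 6; 2]; [:: 4; 1; 9]; [:: 3; 7; 8]];
  [:: [:: 4; 6; 1]; [:: 5; 2; 9]; [:: 3; 7; 8]];
  [:: [:: 17; 18; 13]; [:: 7; 1; 28]; [:: 9; 20; 21]];
  [:: [:: 5; 8; 2]; [:: 6; 4; 7]; [:: 1; 3; 9]];
  [:: [:: 6; 9; 1]; [:: 5; 3; 7]; [:: 2; 4; 8]];
  [:: [:: 5; 9; 2]; [:: 6; 3; 7]; [:: 1; 4; 8]];
  [:: [:: 5; 6; 1]; [:: 4; 2; 8]; [:: 3; 7; 9]];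
  [:: [:: 4; 7; 2]; [:: 5; 1; 6]; [:: 3; 8; 9]];
  [:: [:: 3; 8; 4]; [:: 9; 1; 7]; [:: 2; 5; 6]];
  [:: [:: 7; 14; 8]; [:: 26; 3; 20]; [:: 2; 15; 17]];
  [:: [:: 1; 9; 6]; [:: 7; 4; 5]; [:: 2; 3; 8]];
  [:: [:: 4; 9; 5]; [:: 8; 1; 6]; [:: 2; 3; 7]];
  [:: [:: 6; 7; 2]; [:: 9; 1; 5]; [:: 3; 4; 8]]].
Definition reps : seq (seq bool) := [seq code (natdiag L) | L <- games].
Definition bools := [:: true; false].
Definition C1 := allb 18 (fun x => goodw (dec x) ==>>
   ANY r in reps, ANY l1 in tabs, ANY l2 in tabs, ANY b in bools, equivb r x l1 l2 b).
Definition C2 := ALL r in reps, ALL l1 in tabs, ALL l2 in tabs, ALL b in bools,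
   goodc (fun d d' => dec r (cmapf (pf l1) (pf l2) b d) (cmapf (pf l1) (pf l2) b d')).
Definition C3 := ALL r1 in reps, ALL r2 in reps, (r1 == r2) |||
   ~~ (ANY l1 in tabs, ANY l2 in tabs, ANY b in bools, equivb r2 r1 l1 l2 b).
Definition C5 := ALL L in games, ALL i in ords, ALL i' in ords, ALL j in ords,
   ((i =n i') ||| (natM L i j != natM L i' j)) &&& ((i =n i') ||| (natM L j i != natM L j i')).

Definition valid3 : seq (seq bool) :=
  [:: [:: true; true; true]; [:: true; true; false]; [:: true; false; false];
      [:: false; true; true]; [:: false; false; true]; [:: false; false; false]].
Definition validb (a b c : bool) := ~~ (a && ~~ b && c) && ~~ (~~ a && b && ~~ c).
Fixpoint okl (l : seq bool) : bool :=
  match l with a :: b :: c :: r => validb a b c && okl r | [::] => true | _ => false end.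
Fixpoint allt (n : nat) (P : seq bool -> bool) : bool :=
  if n is n'.+1 then ALL t in valid3, allt n' (fun l => P (t ++ l)) else P [::].
Definition cidx (c : cell) : nat := 3 * nat_of_ord c.1 + nat_of_ord c.2.
Definition adj (e : cell -> cell -> bool) : seq (seq cell) := [seq [seq z <- cells | e y z] | y <- cells].
Definition succ (A : seq (seq cell)) (y : cell) : seq cell := nth [::] A (cidx y).
Fixpoint wk2 (A : seq (seq cell)) (n : nat) (x y : cell) : bool :=
  ANY z in succ A y, ceq z x ||| (if n is n'.+1 then wk2 A n' x z else false).
Definition short2 e := let A := adj e in ANY x in cells, wk2 A 5 x x.
Definition goodw' (arr : cell -> cell -> bool) :=
  cond2b arr &&& no_sinkb arr &&& no_sourceb arr &&&
      ~~ short2 (stepAn arr) &&& ~~ short2 (stepBn arr).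
Definition tpairs : seq (seq 'I_3 * seq 'I_3) :=
  [:: ([::o0;o1;o2], [::o0;o1;o2]); ([::o0;o2;o1], [::o0;o2;o1]); ([::o1;o0;o2], [::o1;o0;o2]);
      ([::o1;o2;o0], [::o2;o0;o1]); ([::o2;o0;o1], [::o1;o2;o0]); ([::o2;o1;o0], [::o2;o1;o0])].
Definition imgc x m1 m2 b :=
  [seq dec x (cmapf (pf m1) (pf m2) b p.1) (cmapf (pf m1) (pf m2) b p.2) | p <- pairs].
Fixpoint eqbs (l1 l2 : seq bool) : bool :=
  match l1, l2 with
  | a :: r, b :: s => beq a b &&& eqbs r s
  | [::], [::] => true
  | _, _ => false
  end.
Definition C1' := allt 6 (fun x => goodw' (dec x) ==>>
   ANY pr1 in tpairs, ANY pr2 in tpairs, ANY b in bools,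
     let y := imgc x pr1.1 pr2.1 b in
     ANY r in reps, eqbs r y &&& equivb r x (if b then pr2.2 else pr1.2) (if b then pr1.2 else pr2.2) b).

End CombPart.
Import CombPart.

Module ReflPart.

Lemma ord3_cases (i : 'I_3) : [\/ i = o0, i = o1 | i = o2].
Proof.
case: i => [[|[|[|m]]] Hm] //.
- by apply: Or31; apply: val_inj.
- by apply: Or32; apply: val_inj.
- by apply: Or33; apply: val_inj.
Qed.

Lemma mem_ords (i : 'I_3) : i \in ords.
Proof. by case: (ord3_cases i) => ->. Qed.

Lemma mem_cells (c : cell) : c \in cells.
Proof. case: c => i j; apply/allpairsP; exists (i, j); by rewrite !mem_ords. Qed.

Lemma allsE T (p : T -> bool) s : alls p s = all p s.
Proof. by elim: s => //= x s ->; case: (p x). Qed.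
Lemma hassE T (p : T -> bool) s : hass p s = has p s.
Proof. by elim: s => //= x s ->; case: (p x). Qed.

Lemma allsP (P : 'I_3 -> bool) : reflect (forall i, P i) (alls P ords).
Proof. rewrite allsE; apply: (iffP allP) => H x; [exact: H (mem_ords x)| move=> _; exact: H]. Qed.
Lemma hassP (P : 'I_3 -> bool) : reflect (exists i, P i) (hass P ords).
Proof. rewrite hassE; apply: (iffP hasP) => [[x _ H]|[x H]]; by exists x => //; exact: mem_ords. Qed.
Lemma allcP (P : cell -> bool) : reflect (forall c, P c) (alls P cells).
Proof. rewrite allsE; apply: (iffP allP) => H x; [exact: H (mem_cells x)| move=> _; exact: H]. Qed.
Lemma hascP (P : cell -> bool) : reflect (exists c, P c) (hass P cells).
Proof. rewrite hassE; apply: (iffP hasP) => [[x _ H]|[x H]]; by exists x => //; exact: mem_cells. Qed.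

Lemma andE' (a b : bool) : (a &&& b) = a && b. Proof. by []. Qed.
Lemma orE' (a b : bool) : (a ||| b) = a || b. Proof. by []. Qed.
Lemma implE' (a b : bool) : (a ==>> b) = a ==> b. Proof. by []. Qed.
Lemma neqn (i j : 'I_3) : (i <>n j) = (i != j). Proof. by []. Qed.
Lemma eqn' (i j : 'I_3) : (i =n j) = (i == j). Proof. by []. Qed.

Lemma cond1P D : cond1 D <-> cond1b (arrow D).
Proof.
split.
- move=> [H1 H2]; rewrite /cond1b andE'; apply/andP; split.
  + apply/allsP => i; apply/allsP => j1; apply/allsP => j2; apply/allsP => j3.
    rewrite !implE' !neqn; apply/implyP => a; apply/implyP => b; apply/implyP => c.
    rewrite !andE'; apply/negP => /and3P [x y z]; exact: (H1 i j1 j2 j3 a b c).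
  + apply/allsP => i; apply/allsP => j1; apply/allsP => j2; apply/allsP => j3.
    rewrite !implE' !neqn; apply/implyP => a; apply/implyP => b; apply/implyP => c.
    rewrite !andE'; apply/negP => /and3P [x y z]; exact: (H2 i j1 j2 j3 a b c).
- rewrite /cond1b andE' => /andP [H1 H2]; split.
  + move=> i j1 j2 j3 a b c [x y z].
    move/allsP: H1 => /(_ i) /allsP /(_ j1) /allsP /(_ j2) /allsP /(_ j3).
    by rewrite !implE' !neqn a b c /= x y z.
  + move=> i j1 j2 j3 a b c [x y z].
    move/allsP: H2 => /(_ i) /allsP /(_ j1) /allsP /(_ j2) /allsP /(_ j3).
    by rewrite !implE' !neqn a b c /= x y z.
Qed.

Lemma cond2P D : cond2 D <-> cond2b (arrow D).
Proof.
split.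
- move=> [H1 H2]; rewrite /cond2b andE'; apply/andP; split.
  + apply/allsP => i; apply/allsP => i'; rewrite implE' neqn; apply/implyP => a.
    apply/negP => /allsP H; exact: (H1 i i' a H).
  + apply/allsP => i; apply/allsP => i'; rewrite implE' neqn; apply/implyP => a.
    apply/negP => /allsP H; exact: (H2 i i' a H).
- rewrite /cond2b andE' => /andP [H1 H2]; split.
  + move=> i i' a H.
    move/allsP: H1 => /(_ i) /allsP /(_ i'); rewrite implE' neqn a implyTb.
    by move/negP; apply; apply/allsP.
  + move=> i i' a H.
    move/allsP: H2 => /(_ i) /allsP /(_ i'); rewrite implE' neqn a implyTb.
    by move/negP; apply; apply/allsP.
Qed.

Lemma sinkP D : no_sink D <-> no_sinkb (arrow D).
Proof.
split.
- move=> H; apply/allcP => c; rewrite andE'; apply/negP => /andP [/allsP H1 /allsP H2].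
  apply: (H c); split => [i' a|j' a].
  + by move: (H1 i'); rewrite implE' neqn a.
  + by move: (H2 j'); rewrite implE' neqn a.
- move=> /allcP H c [H1 H2]; move: (H c); rewrite andE' => /negP; apply; apply/andP; split.
  + by apply/allsP => i'; rewrite implE' neqn; apply/implyP; apply: H1.
  + by apply/allsP => j'; rewrite implE' neqn; apply/implyP; apply: H2.
Qed.

Lemma sourceP D : no_source D <-> no_sourceb (arrow D).
Proof.
split.
- move=> H; apply/allcP => c; rewrite andE'; apply/negP => /andP [/allsP H1 /allsP H2].
  apply: (H c); split => [i' a|j' a].
  + by move: (H1 i'); rewrite implE' neqn a.
  + by move: (H2 j'); rewrite implE' neqn a.
- move=> /allcP H c [H1 H2]; move: (H c); rewrite andE' => /negP; apply; apply/andP; split.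
  + by apply/allsP => i'; rewrite implE' neqn; apply/implyP; apply: H1.
  + by apply/allsP => j'; rewrite implE' neqn; apply/implyP; apply: H2.
Qed.

Lemma wk_sound e n x y : wk e n x y -> exists p, [/\ path e y p, last y p = x & p != [::]].
Proof.
elim: n y => [|n IH] y.
  by move=> H; exists [:: x]; rewrite /= andbT.
rewrite -[wk e n.+1 x y]/(e y x ||| ANY z in cells, e y z &&& wk e n x z) orE' => /orP [H|].
  by exists [:: x]; rewrite /= H.
rewrite hassE => /hasP [z _]; rewrite andE' => /andP [Hz /IH [p [Hp Hl _]]].
by exists (z :: p); rewrite /= Hz Hp.
Qed.

Lemma short_cyc_sound e : short_cyc e -> exists s, s != [::] /\ path.cycle e s.
Proof.
rewrite /short_cyc hassE => /hasP [x _ /wk_sound [[|y p] [Hp Hl Hn]]] //.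
exists (x :: belast y p); split => //.
have E : rcons (belast y p) x = y :: p by rewrite -Hl -lastI.
by rewrite [path.cycle _ _]/= E.
Qed.

Lemma ceqE (c c' : cell) : ceq c c' = (c == c').
Proof. by case: c c' => [i j] [i' j']; rewrite /ceq andE' xpair_eqE. Qed.

Lemma pick_spec e S0 S x : pickc e S0 S = Some x -> x \in S /\ ~~ has (fun y => e y x) S0.
Proof.
elim: S => //= a S IH; rewrite hassE; case: ifP => [_ /IH [H1 H2]|/negbT H [<-]].
  by rewrite inE H1 orbT.
by rewrite inE eqxx.
Qed.

Lemma elim_sound e n S : elim e n S ->
  forall s, s != [::] -> path.cycle e s -> {subset s <= S} -> False.
Proof.
elim: n S => [|n IH] [|a S].
- by move=> _ [|x s] // _ _ /(_ x); rewrite inE eqxx => /(_ isT).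
- by [].
- by move=> _ [|x s] // _ _ /(_ x); rewrite inE eqxx => /(_ isT).
rewrite -[elim e n.+1 (a :: S)]/(if pickc e (a::S) (a::S) is Some x then elim e n [seq y <- a::S | ~~ ceq y x] else false).
case E: (pickc e (a :: S) (a :: S)) => [x|] // He s Hs Hc Hsub.
have [Hx Hno] := pick_spec E.
case Hxs: (x \in s).
  have Hp := prev_cycle Hc Hxs.
  have Hps : prev s x \in s by rewrite mem_prev.
  move/hasPn: Hno => /(_ _ (Hsub _ Hps)); by rewrite Hp.
apply: (IH _ He s Hs Hc) => y Hy; rewrite mem_filter ceqE (Hsub _ Hy) andbT.
by apply/negP => /eqP Ey; rewrite -Ey Hy in Hxs.
Qed.

Lemma pot_cycle (T : eqType) (F : T -> nat) (s : seq T) :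
  s != [::] -> path.cycle (fun x y => F x < F y) s -> False.
Abort.

Lemma altP1 D : no_alt_cycle D -> ~~ short_cyc (stepAn (arrow D)) && ~~ short_cyc (stepBn (arrow D)).
Proof.
move=> H; apply/andP; split; apply/negP => /short_cyc_sound [s [Hs Hc]]; apply: (H s); split => //.
- by left; exact: Hc.
- by right; exact: Hc.
Qed.

Lemma altP2 D : elim (stepAn (arrow D)) 9 cells -> elim (stepBn (arrow D)) 9 cells -> no_alt_cycle D.
Proof.
move=> HA HB s [Hs [Hc|Hc]].
- by apply: (elim_sound HA Hs Hc) => c _; exact: mem_cells.
- by apply: (elim_sound HB Hs Hc) => c _; exact: mem_cells.
Qed.

Lemma good_goodw D : good D -> goodw (arrow D).
Proof.
move=> [H1 H2 H3 H4 H5]; rewrite /goodw !andE'.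
move/altP1: H5 => /andP [H5 H6].
by apply/and5P; split; [apply/cond2P|apply/sinkP|apply/sourceP|apply/cond1P|apply/andP].
Qed.

Lemma goodc_good D : goodc (arrow D) -> good D.
Proof.
rewrite /goodc !andE' => /and5P [H1 H2 H3 H4 /andP [H5 H6]]; split.
- by apply/cond1P.
- by apply/cond2P.
- by apply/sinkP.
- by apply/sourceP.
- exact: altP2.
Qed.

Ltac ocases i := case: (ord3_cases i) => ->.

Lemma dec_isdf x : isdf (dec x).
Proof.
split; [|split].
- move=> j i i'; ocases j; ocases i; ocases i' => //= _; rewrite /dec /o0 /o1 /o2 /=;
    by case: (nth false x _).
- move=> i j j'; ocases i; ocases j; ocases j' => //= _; rewrite /dec /o0 /o1 /o2 /=;
    by case: (nth false x _).
- move=> [i j] [i' j']; ocases i; ocases j; ocases i'; ocases j'; by rewrite /dec /o0 /o1 /o2 /=.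
Qed.

Lemma negb_of (a b : bool) : a != b -> b = ~~ a.
Proof. by case: a; case: b. Qed.

Lemma dec_code arr : isdf arr -> forall c c', arr c c' = dec (code arr) c c'.
Proof.
move=> [H1 [H2 H3]] [i j] [i' j']; ocases i; ocases j; ocases i'; ocases j';
  rewrite /dec /code /=;
  first [ done | apply/negbTE/negP => /H3; by rewrite /o0 /o1 /o2 /=
        | apply: negb_of; apply: H1 => //
        | apply: negb_of; apply: H2 => // ].
Qed.

Lemma arrow_mkD x c c' : arrow (mkD x) c c' = dec x c c'.
Proof. by rewrite /arrow /mkD inE. Qed.

End ReflPart.
Import ReflPart.

Module CheckPart.
Import GroupScope.

Lemma allsPs (T : eqType) (P : T -> bool) s : reflect {in s, forall x, P x} (alls P s).
Proof. rewrite allsE; exact: allP. Qed.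
Lemma hassPs (T : eqType) (P : T -> bool) s : reflect (exists2 x, x \in s & P x) (hass P s).
Proof. rewrite hassE; exact: hasP. Qed.

Lemma allb_sound n P : allb n P -> forall l, size l = n -> P l.
Proof.
elim: n P => [|n IH] P /=; first by move=> H [|//].
rewrite andE' => /andP [H1 H2] [|[] l] //= [Hl].
- exact: (IH _ H1).
- exact: (IH _ H2).
Qed.

Lemma size_code arr : size (code arr) = 18.
Proof. by []. Qed.

Lemma o_neq : [/\ o0 != o1, o0 != o2 & o1 != o2].
Proof. by []. Qed.

Lemma perm_tab (s : 'S_3) : exists2 l, l \in tabs & forall i, s i = pf l i.
Proof.
exists [:: s o0; s o1; s o2]; last by move=> i; ocases i.
have Hu : uniq [:: s o0; s o1; s o2].
  have -> : [:: s o0; s o1; s o2] = map s ords by [].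
  by rewrite map_inj_uniq //; exact: perm_inj.
move: Hu; case: (ord3_cases (s o0)) => ->; case: (ord3_cases (s o1)) => ->;
  case: (ord3_cases (s o2)) => -> //.
Qed.

Lemma tab_inj l : l \in tabs -> injective (pf l).
Proof.
rewrite !inE => /or4P [/eqP->|/eqP->|/eqP->|/orP [/eqP->|/orP [/eqP->|/eqP->]]] //= i j;
  ocases i; ocases j => //.
Qed.

Lemma cell_map_tab (s t : 'S_3) l1 l2 b c :
  (forall i, s i = pf l1 i) -> (forall i, t i = pf l2 i) ->
  cell_map s t b c = cmapf (pf l1) (pf l2) b c.
Proof. by move=> Hs Ht; rewrite /cell_map /cmapf Hs Ht. Qed.

Lemma cell_map_inv (s t : 'S_3) b :
  exists s' t' : 'S_3, forall c, cell_map s t b (cell_map s' t' b c) = c.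
Proof.
case: b.
- exists t^-1, s^-1 => [[i j]]; by rewrite /cell_map /= !permKV.
- exists s^-1, t^-1 => [[i j]]; by rewrite /cell_map /= !permKV.
Qed.

Lemma cell_map_comp (s1 t1 s2 t2 : 'S_3) b1 b2 :
  exists (s t : 'S_3) b, forall c, cell_map s2 t2 b2 (cell_map s1 t1 b1 c) = cell_map s t b c.
Proof.
case: b1; case: b2.
- exists (s1 * t2), (t1 * s2), false => [[i j]]; by rewrite /cell_map /= !permM.
- exists (s1 * t2), (t1 * s2), true => [[i j]]; by rewrite /cell_map /= !permM.
- exists (s1 * s2), (t1 * t2), true => [[i j]]; by rewrite /cell_map /= !permM.
- exists (s1 * s2), (t1 * t2), false => [[i j]]; by rewrite /cell_map /= !permM.
Qed.

Lemma comb_equiv_sym D1 D2 : comb_equiv D1 D2 -> comb_equiv D2 D1.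
Proof.
move=> [s [t [b H]]]; have [s' [t' Hi]] := cell_map_inv s t b.
exists s', t', b => c c'; by rewrite -H !Hi.
Qed.

Lemma arrow_ext D F : (forall c c', arrow D c c' = F c c') -> arrow D = F.
Proof. move=> H; apply: functional_extensionality => c; apply: functional_extensionality => c'; exact: H. Qed.

Lemma beqE a b : beq a b = (a == b).
Proof. by case: a; case: b. Qed.

Lemma equivb_comb D x r l1 l2 b : (forall c c', arrow D c c' = dec x c c') ->
  l1 \in tabs -> l2 \in tabs -> equivb r x l1 l2 b -> comb_equiv D (mkD r).
Proof.
move=> HD H1 H2 /allcP He.
exists (perm (tab_inj H1)), (perm (tab_inj H2)), b => c c'.
have Hs : forall i, perm (tab_inj H1) i = pf l1 i by move=> i; rewrite permE.
have Ht : forall i, perm (tab_inj H2) i = pf l2 i by move=> i; rewrite permE.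
rewrite !(cell_map_tab _ _ Hs Ht) arrow_mkD HD; move: (He c) => /allcP /(_ c'); by rewrite beqE => /eqP.
Qed.

Lemma C1_true : C1'. Proof. by vm_compute. Qed.
Lemma C2_true : C2. Proof. by vm_compute. Qed.
Lemma C3_true : C3. Proof. by vm_compute. Qed.
Lemma C5_true : C5. Proof. by vm_compute. Qed.

Lemma diag_code D : is_diagram D -> forall c c', arrow D c c' = dec (code (arrow D)) c c'.
Proof. move=> H; exact: dec_code H. Qed.

Lemma allt_sound n P : allt n P -> forall l, size l = (3 * n)%N -> okl l -> P l.
Proof.
elim: n P => [|n IH] P; first by move=> H [|//].
rewrite -[allt n.+1 P]/(alls (fun t => allt n (fun l => P (t ++ l))) valid3).
move=> /allsPs H [|a [|b [|c l]]] //; rewrite mulnS => Hs.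
have Hl : size l = (3 * n)%N by move: Hs => /= /eqP; rewrite !addSn add0n !eqSS => /eqP.
move=> /= /andP [Hv Hok].
have Ht : [:: a; b; c] \in valid3 by clear -Hv; move: Hv; case: a; case: b; case: c.
exact: (IH _ (H _ Ht) l Hl Hok).
Qed.

Lemma line_valid (r : cell -> cell -> bool) x0 x1 x2 :
  r x1 x0 = ~~ r x0 x1 -> r x2 x0 = ~~ r x0 x2 -> r x2 x1 = ~~ r x1 x2 ->
  ~ [/\ r x0 x1, r x1 x2 & r x2 x0] -> ~ [/\ r x0 x2, r x2 x1 & r x1 x0] ->
  validb (r x0 x1) (r x0 x2) (r x1 x2).
Proof.
move=> e1 e2 e3; rewrite e1 e2 e3 /validb.
by case: (r x0 x1); case: (r x0 x2); case: (r x1 x2) => //= H1 H2; [case: H1|case: H2].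
Qed.

Lemma code_okl D : is_diagram D -> cond1 D -> okl (code (arrow D)).
Proof.
move=> [H1 [H2 _]] [C1 C2].
have V : forall j (i i' : 'I_3), i != i' -> arrow D (i', j) (i, j) = ~~ arrow D (i, j) (i', j).
  by move=> j i i' h; apply: negb_of; apply: H1.
have Hh : forall i (j j' : 'I_3), j != j' -> arrow D (i, j') (i, j) = ~~ arrow D (i, j) (i, j').
  by move=> i j j' h; apply: negb_of; apply: H2.
have colv : forall j, validb (arrow D (o0,j) (o1,j)) (arrow D (o0,j) (o2,j)) (arrow D (o1,j) (o2,j)).
  move=> j; apply: line_valid; [exact: (V j o0 o1 isT)|exact: (V j o0 o2 isT)|exact: (V j o1 o2 isT)| |].
  - move=> [x y z]; exact: (C2 j o0 o1 o2 isT isT isT (And3 x y z)).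
  - move=> [x y z]; exact: (C2 j o0 o2 o1 isT isT isT (And3 x y z)).
have rowv : forall i, validb (arrow D (i,o0) (i,o1)) (arrow D (i,o0) (i,o2)) (arrow D (i,o1) (i,o2)).
  move=> i; apply: line_valid; [exact: (Hh i o0 o1 isT)|exact: (Hh i o0 o2 isT)|exact: (Hh i o1 o2 isT)| |].
  - move=> [x y z]; exact: (C1 i o0 o1 o2 isT isT isT (And3 x y z)).
  - move=> [x y z]; exact: (C1 i o0 o2 o1 isT isT isT (And3 x y z)).
rewrite /code /=.
by rewrite !colv !rowv.
Qed.

Lemma nth_cells y : nth (o0, o0) cells (cidx y) = y.
Proof. by case: y => i j; ocases i; ocases j. Qed.
Lemma cidx_lt y : cidx y < size cells.
Proof. by case: y => i j; ocases i; ocases j. Qed.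

Lemma succ_adj e y z : z \in succ (adj e) y -> e y z.
Proof. by rewrite /succ /adj (nth_map (o0, o0)) ?cidx_lt // nth_cells mem_filter => /andP []. Qed.

Lemma wk2_sound e n x y : wk2 (adj e) n x y -> exists p, [/\ path e y p, last y p = x & p != [::]].
Proof.
elim: n y => [|n IH] y; rewrite /wk2 -/wk2 => /hassPs [z Hz]; rewrite orE' ceqE => /orP [/eqP Ez|].
- by exists [:: z]; rewrite /= (succ_adj Hz) Ez.
- by [].
- by exists [:: z]; rewrite /= (succ_adj Hz) Ez.
- move/IH => [p [Hp Hl _]]; exists (z :: p); by rewrite /= (succ_adj Hz) Hp.
Qed.

Lemma short2_sound e : short2 e -> exists s, s != [::] /\ path.cycle e s.
Proof.
rewrite /short2 => /hascP [x /wk2_sound [[|y p] [Hp Hl Hn]]] //.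
exists (x :: belast y p); split => //.
have E : rcons (belast y p) x = y :: p by rewrite -Hl -lastI.
by rewrite [path.cycle _ _]/= E.
Qed.

Lemma good_goodw' D : good D -> goodw' (arrow D).
Proof.
move=> [H1 H2 H3 H4 H5]; rewrite /goodw' !andE'.
have H6 : ~~ short2 (stepAn (arrow D)) && ~~ short2 (stepBn (arrow D)).
  apply/andP; split; apply/negP => /short2_sound [s [Hs Hc]]; apply: (H5 s); split => //.
  - by left; exact: Hc.
  - by right; exact: Hc.
by apply/and4P; split; [apply/cond2P|apply/sinkP|apply/sourceP|].
Qed.

Lemma tp_tabs pr : pr \in tpairs -> pr.1 \in tabs /\ pr.2 \in tabs.
Proof.
have : alls (fun pr => (pr.1 \in tabs) && (pr.2 \in tabs)) tpairs by vm_compute.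
by move/allsPs => /(_ pr) H /H /andP.
Qed.

Lemma complete D : is_diagram D -> good D -> exists2 r, r \in reps & comb_equiv D (mkD r).
Proof.
move=> Hd Hg.
have Hw := good_goodw' Hg.
have Hok := code_okl Hd (let: And5 h _ _ _ _ := Hg in h).
have Hc := diag_code Hd.
have E := arrow_ext Hc. rewrite E in Hw.
have := allt_sound C1_true (size_code (arrow D)) Hok.
rewrite Hw => /hassPs [pr1 Hp1 /hassPs [pr2 Hp2 /hassPs [b _]]].
move=> /hassPs [r Hr]; rewrite andE' => /andP [_ Hb].
have [t11 t12] := tp_tabs Hp1; have [t21 t22] := tp_tabs Hp2.
exists r => //; apply: (equivb_comb Hc _ _ Hb); by case: (b).
Qed.

Lemma goodc_map r l1 l2 b : r \in reps -> l1 \in tabs -> l2 \in tabs ->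
  goodc (fun d d' => dec r (cmapf (pf l1) (pf l2) b d) (cmapf (pf l1) (pf l2) b d')).
Proof.
move=> Hr H1 H2; move/allsPs: C2_true => /(_ r Hr) /allsPs /(_ l1 H1) /allsPs /(_ l2 H2)
  /allsPs; apply; by case: b.
Qed.

Lemma transfer G D : is_diagram G -> good G -> comb_equiv G D -> good D.
Proof.
move=> HG Hg [s1 [t1 [b1 H1]]].
have [r Hr [s2 [t2 [b2 H2]]]] := complete HG Hg.
have [s1' [t1' Hi]] := cell_map_inv s1 t1 b1.
have [s [t [b Hc]]] := cell_map_comp s1' t1' s2 t2 b1 b2.
have [l1 Hl1 Hs] := perm_tab s.
have [l2 Hl2 Ht] := perm_tab t.
apply: goodc_good.
have -> : arrow D = (fun d d' => dec r (cmapf (pf l1) (pf l2) b d) (cmapf (pf l1) (pf l2) b d')).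
  apply: arrow_ext => d d'.
  by rewrite -[d in LHS]Hi -[d' in LHS]Hi H1 -H2 !Hc arrow_mkD !(cell_map_tab _ _ Hs Ht).
exact: goodc_map.
Qed.

Definition id3 := [:: o0; o1; o2].
Lemma pf_id i : pf id3 i = i.
Proof. by ocases i. Qed.

Lemma reps_good r : r \in reps -> is_diagram (mkD r) /\ good (mkD r).
Proof.
move=> Hr; split.
  have E : arrow (mkD r) = dec r by apply: arrow_ext => c c'; rewrite arrow_mkD.
  rewrite /is_diagram E; exact: dec_isdf.
apply: goodc_good.
have -> : arrow (mkD r) = (fun d d' => dec r (cmapf (pf id3) (pf id3) false d) (cmapf (pf id3) (pf id3) false d')).
  apply: arrow_ext => [[i j] [i' j']]; by rewrite arrow_mkD /cmapf !pf_id.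
by apply: goodc_map.
Qed.

Lemma reps_ineq r1 r2 : r1 \in reps -> r2 \in reps -> comb_equiv (mkD r1) (mkD r2) -> r1 = r2.
Proof.
move=> H1 H2 [s [t [b H]]].
have [l1 Hl1 Hs] := perm_tab s.
have [l2 Hl2 Ht] := perm_tab t.
move/allsPs: C3_true => /(_ r1 H1) /allsPs /(_ r2 H2); rewrite orE' => /orP [/eqP //|].
move/negP; case; apply/hassPs; exists l1 => //; apply/hassPs; exists l2 => //.
have Hb : forall b : bool, b \in bools by case.
apply/hassPs; exists b; first exact: Hb.
apply/allcP => c; apply/allcP => c'.
by rewrite beqE -!arrow_mkD -!(cell_map_tab _ _ Hs Ht) H.
Qed.

Lemma code_dec_reps r : r \in reps -> code (dec r) = r.
Proof.
move=> Hr; have : alls (fun r => code (dec r) == r) reps by vm_compute.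
by move/allsPs => /(_ r Hr) /eqP.
Qed.

Lemma uniq_reps : uniq [seq mkD r | r <- reps].
Proof.
rewrite map_inj_in_uniq; first by vm_compute.
move=> r1 r2 H1 H2 E.
rewrite -(code_dec_reps H1) -(code_dec_reps H2).
have E1 : dec r1 = arrow (mkD r1) by apply: esym; apply: arrow_ext => c c'; rewrite arrow_mkD.
have E2 : dec r2 = arrow (mkD r2) by apply: esym; apply: arrow_ext => c c'; rewrite arrow_mkD.
by rewrite E1 E2 E.
Qed.

End CheckPart.
Import CheckPart.

Module GamePart.
Import Order.TTheory GRing.Theory Num.Theory.
Local Open Scope ring_scope.

Section G.
Variable R : realType.

Lemma sum3 (F : 'I_3 -> R) : \sum_(i < 3) F i = F o0 + F o1 + F o2.
Proof.
rewrite !big_ord_recr big_ord0 /= GRing.add0r.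
by congr (F _ + F _ + F _); apply: val_inj.
Qed.

Lemma payoffE (p : 'rV[R]_3) (M : 'M[R]_3) (q : 'cV[R]_3) : payoff p M q =
  p 0 o0 * (M o0 o0 * q o0 0 + M o0 o1 * q o1 0 + M o0 o2 * q o2 0) +
  p 0 o1 * (M o1 o0 * q o0 0 + M o1 o1 * q o1 0 + M o1 o2 * q o2 0) +
  p 0 o2 * (M o2 o0 * q o0 0 + M o2 o1 * q o1 0 + M o2 o2 * q o2 0).
Proof. rewrite /payoff !mxE sum3 !mxE !sum3; ring. Qed.

Lemma probRow_sum (p : 'rV[R]_3) : probRow p -> p 0 o0 + p 0 o1 + p 0 o2 = 1.
Proof. by case=> _; rewrite sum3. Qed.
Lemma probCol_sum (q : 'cV[R]_3) : probCol q -> q o0 0 + q o1 0 + q o2 0 = 1.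
Proof. by case=> _; rewrite sum3. Qed.

Definition erow (i : 'I_3) : 'rV[R]_3 := \row_(j < 3) (if j == i then 1 else 0).
Definition ecol (j : 'I_3) : 'cV[R]_3 := \col_(i < 3) (if i == j then 1 else 0).

Lemma erow_prob i : probRow (erow i).
Proof.
split => [j|]; first by rewrite mxE; case: ifP.
by rewrite sum3 !mxE; ocases i => /=; lra.
Qed.
Lemma ecol_prob j : probCol (ecol j).
Proof.
split => [i|]; first by rewrite mxE; case: ifP.
by rewrite sum3 !mxE; ocases j => /=; lra.
Qed.

Lemma payoff_erow i M (q : 'cV[R]_3) :
  payoff (erow i) M q = M i o0 * q o0 0 + M i o1 * q o1 0 + M i o2 * q o2 0.
Proof. rewrite payoffE !mxE; ocases i => /=; ring. Qed.
Lemma payoff_ecol j (p : 'rV[R]_3) M :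
  payoff p M (ecol j) = p 0 o0 * M o0 j + p 0 o1 * M o1 j + p 0 o2 * M o2 j.
Proof. rewrite payoffE !mxE; ocases j => /=; ring. Qed.

Lemma conv3 (p0 p1 p2 r0 r1 r2 v : R) : 0 < p0 -> 0 < p1 -> 0 < p2 -> p0 + p1 + p2 = 1 ->
  r0 <= v -> r1 <= v -> r2 <= v -> p0*r0 + p1*r1 + p2*r2 = v -> [/\ r0 = v, r1 = v & r2 = v].
Proof.
move=> H0 H1 H2 Hs Hr0 Hr1 Hr2 Hv.
have h0 : 0 <= p0 * (v - r0) by apply: mulr_ge0; lra.
have h1 : 0 <= p1 * (v - r1) by apply: mulr_ge0; lra.
have h2 : 0 <= p2 * (v - r2) by apply: mulr_ge0; lra.
have e : p0 * (v - r0) + p1 * (v - r1) + p2 * (v - r2) = 0.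
  transitivity (v * (p0 + p1 + p2) - (p0 * r0 + p1 * r1 + p2 * r2)); first by ring.
  by rewrite Hs Hv mulr1 subrr.
have z : forall p r, 0 < p -> p * (v - r) = 0 -> r = v.
  move=> p r Hp /eqP; rewrite mulf_eq0 => /orP [/eqP|/eqP]; lra.
split; [apply: (z p0)|apply: (z p1)|apply: (z p2)] => //; lra.
Qed.

Lemma indiff_row (A : 'M[R]_3) p q : probRow p -> (forall j, 0 < p 0 j) ->
  (forall p', probRow p' -> payoff p' A q <= payoff p A q) ->
  forall i, A i o0 * q o0 0 + A i o1 * q o1 0 + A i o2 * q o2 0 = payoff p A q.
Proof.
move=> Hp Hpos Hbr.
have H : forall i, A i o0 * q o0 0 + A i o1 * q o1 0 + A i o2 * q o2 0 <= payoff p A q.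
  by move=> i; rewrite -payoff_erow; apply: Hbr; exact: erow_prob.
have Hs := probRow_sum Hp.
have [e0 e1 e2] := conv3 (Hpos o0) (Hpos o1) (Hpos o2) Hs (H o0) (H o1) (H o2) (esym (payoffE p A q)).
by move=> i; ocases i.
Qed.

Lemma indiff_col (B : 'M[R]_3) p q : probCol q -> (forall i, 0 < q i 0) ->
  (forall q', probCol q' -> payoff p B q' <= payoff p B q) ->
  forall j, p 0 o0 * B o0 j + p 0 o1 * B o1 j + p 0 o2 * B o2 j = payoff p B q.
Proof.
move=> Hq Hpos Hbr.
have H : forall j, p 0 o0 * B o0 j + p 0 o1 * B o1 j + p 0 o2 * B o2 j <= payoff p B q.
  by move=> j; rewrite -payoff_ecol; apply: Hbr; exact: ecol_prob.
have Hs := probCol_sum Hq.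
have E : q o0 0 * (p 0 o0 * B o0 o0 + p 0 o1 * B o1 o0 + p 0 o2 * B o2 o0) +
         q o1 0 * (p 0 o0 * B o0 o1 + p 0 o1 * B o1 o1 + p 0 o2 * B o2 o1) +
         q o2 0 * (p 0 o0 * B o0 o2 + p 0 o1 * B o1 o2 + p 0 o2 * B o2 o2) = payoff p B q.
  by rewrite payoffE; ring.
have [e0 e1 e2] := conv3 (Hpos o0) (Hpos o1) (Hpos o2) Hs (H o0) (H o1) (H o2) E.
by move=> j; ocases j.
Qed.


Lemma game_arrow (A B : 'M[R]_3) c c' : arrow (game_diagram A B) c c' =
  ((c.2 == c'.2) && (A c.1 c.2 < A c'.1 c'.2)) || ((c.1 == c'.1) && (B c.1 c.2 < B c'.1 c'.2)).
Proof. by rewrite /arrow /game_diagram inE. Qed.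

Lemma game_isd (A B : 'M[R]_3) : assumption1 A B -> is_diagram (game_diagram A B).
Proof.
move=> [HA HB]; split; [|split].
- move=> j i i' Hii'; rewrite !game_arrow /= eqxx !andTb (negbTE Hii') andFb orbF.
  rewrite [i' == i]eq_sym (negbTE Hii') andFb orbF.
  by case: (ltgtP (A i j) (A i' j)) => // E; move: (HA i i' j Hii'); rewrite E eqxx.
- move=> i j j' Hjj'; rewrite !game_arrow /= (negbTE Hjj') andFb orFb.
  rewrite [j' == j]eq_sym (negbTE Hjj') andFb orFb eqxx !andTb.
  by case: (ltgtP (B i j) (B i j')) => // E; move: (HB i j j' Hjj'); rewrite E eqxx.
- move=> [i j] [i' j']; rewrite game_arrow /= => /orP [/andP [/eqP Ej Hlt]|/andP [/eqP Ei Hlt]].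
  + subst j'; rewrite eqxx; case E: (i == i') => //; move/eqP: E Hlt => ->; by rewrite ltxx.
  + subst i'; rewrite eqxx; case E: (j == j') => //; move/eqP: E Hlt => ->; by rewrite ltxx.
Qed.

Lemma path_pot (T : eqType) (F : T -> R) y p : path (fun x y => F x < F y) y p -> p != [::] ->
  F y < F (last y p).
Proof.
elim: p y => [//|z p IH] y /= /andP [H1 H2] _.
case: p IH H2 => [|w p] IH H2 /=; first by [].
apply: lt_trans H1 _; exact: (IH z H2).
Qed.

Lemma pot_cycle (T : eqType) (F : T -> R) s : s != [::] ->
  path.cycle (fun x y => F x < F y) s -> False.
Proof.
case: s => [//|x s] _ /= H.
have HH : rcons s x != [::] by case: s {H}.
by move: (path_pot H HH); rewrite last_rcons ltxx.
Qed.

Lemma pos_prod (a x y : R) : 0 < a -> x < y -> 0 < a * (y - x).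
Proof. move=> Ha Hxy; apply: mulr_gt0 => //; by rewrite subr_gt0. Qed.

Lemma rowdomC (C : 'I_3 -> 'I_3 -> R) (q : 'cV[R]_3) u i i' :
  (forall i, 0 < q i 0) ->
  (forall i, C i o0 * q o0 0 + C i o1 * q o1 0 + C i o2 * q o2 0 = u) ->
  (forall j, C i j < C i' j) -> False.
Proof.
move=> Hq EU H.
have := EU i; have := EU i'.
have := pos_prod (Hq o0) (H o0); have := pos_prod (Hq o1) (H o1); have := pos_prod (Hq o2) (H o2).
lra.
Qed.

Lemma coldomC (C : 'I_3 -> 'I_3 -> R) (p : 'rV[R]_3) u j j' :
  (forall j, 0 < p 0 j) ->
  (forall j, p 0 o0 * C o0 j + p 0 o1 * C o1 j + p 0 o2 * C o2 j = u) ->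
  (forall i, C i j < C i j') -> False.
Proof.
move=> Hp EW H.
have := EW j; have := EW j'.
have := pos_prod (Hp o0) (H o0); have := pos_prod (Hp o1) (H o1); have := pos_prod (Hp o2) (H o2).
lra.
Qed.

Lemma avg_gt (q0 q1 q2 a0 a1 a2 m : R) : 0 < q0 -> 0 < q1 -> 0 < q2 -> q0 + q1 + q2 = 1 ->
  m <= a0 -> m <= a1 -> m <= a2 -> m < a0 \/ m < a1 \/ m < a2 -> m < q0 * a0 + q1 * a1 + q2 * a2.
Proof.
move=> h0 h1 h2 hs l0 l1 l2 hh.
have e : q0 * a0 + q1 * a1 + q2 * a2 - m = q0 * (a0 - m) + q1 * (a1 - m) + q2 * (a2 - m).
  by rewrite -[X in _ - X]mul1r -hs; ring.
have t0 : 0 <= q0 * (a0 - m) by apply: mulr_ge0; lra.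
have t1 : 0 <= q1 * (a1 - m) by apply: mulr_ge0; lra.
have t2 : 0 <= q2 * (a2 - m) by apply: mulr_ge0; lra.
case: hh => [h|[h|h]].
- have : 0 < q0 * (a0 - m) by apply: mulr_gt0; lra. lra.
- have : 0 < q1 * (a1 - m) by apply: mulr_gt0; lra. lra.
- have : 0 < q2 * (a2 - m) by apply: mulr_gt0; lra. lra.
Qed.

Lemma le_of_neq (x : 'I_3) (F : 'I_3 -> R) (m : R) :
  (forall k, k != x -> m < F k) -> m <= F x -> forall k, m <= F k.
Proof.
move=> H Hx k; case E: (k == x); first by move/eqP: E => E; subst k.
by apply: ltW; apply: H; rewrite E.
Qed.

Lemma one_strict (x : 'I_3) (F : 'I_3 -> R) (m : R) :
  (forall k, k != x -> m < F k) -> m < F o0 \/ m < F o1 \/ m < F o2.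
Proof. by move=> H; case: (ord3_cases x) H => -> H; [right; left|left|left]; apply: H. Qed.

Lemma sinkC (C : 'I_3 -> 'I_3 -> R) (p : 'rV[R]_3) (q : 'cV[R]_3) u i j :
  (forall j, 0 < p 0 j) -> (forall i, 0 < q i 0) ->
  p 0 o0 + p 0 o1 + p 0 o2 = 1 -> q o0 0 + q o1 0 + q o2 0 = 1 ->
  (forall i, C i o0 * q o0 0 + C i o1 * q o1 0 + C i o2 * q o2 0 = u) ->
  (forall j, p 0 o0 * C o0 j + p 0 o1 * C o1 j + p 0 o2 * C o2 j = u) ->
  (forall i', i' != i -> C i' j < C i j) -> (forall j', j' != j -> C i j < C i j') -> False.
Proof.
move=> Hp Hq Sp Sq EU EW H1 H2.
have H1' : forall k, k != i -> - C i j < - C k j by move=> k /H1; rewrite ltrN2.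
have L1 := le_of_neq (F := fun k => C i k) H2 (lexx _).
have L2 := le_of_neq (F := fun k => - C k j) H1' (lexx _).
have U := avg_gt (Hq o0) (Hq o1) (Hq o2) Sq (L1 o0) (L1 o1) (L1 o2) (one_strict H2).
have W := avg_gt (Hp o0) (Hp o1) (Hp o2) Sp (L2 o0) (L2 o1) (L2 o2) (one_strict H1').
have := EU i; have := EW j; lra.
Qed.

Lemma sourceC (C : 'I_3 -> 'I_3 -> R) (p : 'rV[R]_3) (q : 'cV[R]_3) u i j :
  (forall j, 0 < p 0 j) -> (forall i, 0 < q i 0) ->
  p 0 o0 + p 0 o1 + p 0 o2 = 1 -> q o0 0 + q o1 0 + q o2 0 = 1 ->
  (forall i, C i o0 * q o0 0 + C i o1 * q o1 0 + C i o2 * q o2 0 = u) ->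
  (forall j, p 0 o0 * C o0 j + p 0 o1 * C o1 j + p 0 o2 * C o2 j = u) ->
  (forall i', i' != i -> C i j < C i' j) -> (forall j', j' != j -> C i j' < C i j) -> False.
Proof.
move=> Hp Hq Sp Sq EU EW H1 H2.
have H2' : forall k, k != j -> - C i j < - C i k by move=> k /H2; rewrite ltrN2.
have L1 := le_of_neq (F := fun k => - C i k) H2' (lexx _).
have L2 := le_of_neq (F := fun k => C k j) H1 (lexx _).
have U := avg_gt (Hq o0) (Hq o1) (Hq o2) Sq (L1 o0) (L1 o1) (L1 o2) (one_strict H2').
have W := avg_gt (Hp o0) (Hp o1) (Hp o2) Sp (L2 o0) (L2 o1) (L2 o2) (one_strict H1).
have := EU i; have := EW j; lra.
Qed.


Lemma game_good (A B : 'M[R]_3) : assumption3 A B -> zero_sum A B -> good (game_diagram A B).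
Proof.
move=> [p [q [[Hp [Hq [[_ HbrA] [_ HbrB]]]] Hpp Hqq _]]] [e [g [f [h [He Hg Hz]]]]].
have IA := indiff_row Hp Hpp HbrA.
have IB := indiff_col Hq Hqq HbrB.
have Sp := probRow_sum Hp; have Sq := probCol_sum Hq.
pose C i j := e * A i j + f j.
have HC : forall i j, C i j = - (g * B i j + h i) by move=> i j; rewrite /C; have := Hz i j; lra.
pose u := e * payoff p A q + (f o0 * q o0 0 + f o1 * q o1 0 + f o2 * q o2 0).
have EU : forall i, C i o0 * q o0 0 + C i o1 * q o1 0 + C i o2 * q o2 0 = u.
  by move=> i; rewrite /C /u -(IA i); ring.
pose w := - (g * payoff p B q + (p 0 o0 * h o0 + p 0 o1 * h o1 + p 0 o2 * h o2)).
have EW : forall j, p 0 o0 * C o0 j + p 0 o1 * C o1 j + p 0 o2 * C o2 j = w.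
  by move=> j; rewrite !HC /w -(IB j); ring.
have Euw : u = w.
  have E : p 0 o0 * (C o0 o0 * q o0 0 + C o0 o1 * q o1 0 + C o0 o2 * q o2 0) +
           p 0 o1 * (C o1 o0 * q o0 0 + C o1 o1 * q o1 0 + C o1 o2 * q o2 0) +
           p 0 o2 * (C o2 o0 * q o0 0 + C o2 o1 * q o1 0 + C o2 o2 * q o2 0) =
           q o0 0 * (p 0 o0 * C o0 o0 + p 0 o1 * C o1 o0 + p 0 o2 * C o2 o0) +
           q o1 0 * (p 0 o0 * C o0 o1 + p 0 o1 * C o1 o1 + p 0 o2 * C o2 o1) +
           q o2 0 * (p 0 o0 * C o0 o2 + p 0 o1 * C o1 o2 + p 0 o2 * C o2 o2) by ring.
  rewrite !EU !EW in E.
  have E2 : u * (p 0 o0 + p 0 o1 + p 0 o2) = w * (q o0 0 + q o1 0 + q o2 0).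
    by lra.
  by rewrite Sp Sq !mulr1 in E2.
rewrite -Euw in EW.
have hAC : forall i i' j, A i j < A i' j -> C i j < C i' j.
  move=> i i' j H; rewrite /C; have : e * A i j < e * A i' j by rewrite ltr_pM2l. lra.
have hBC : forall i j j', B i j < B i j' -> C i j' < C i j.
  move=> i j j' H; rewrite !HC; have : g * B i j < g * B i j' by rewrite ltr_pM2l. lra.
pose G := game_diagram A B.
have hcol : forall j i i', i != i' -> arrow G (i, j) (i', j) -> A i j < A i' j.
  move=> j i i' Hii'; rewrite game_arrow /= eqxx andTb (negbTE Hii') andFb orbF //.
have hrow : forall i j j', j != j' -> arrow G (i, j) (i, j') -> B i j < B i j'.
  move=> i j j' Hjj'; rewrite game_arrow /= (negbTE Hjj') andFb orFb eqxx andTb //.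
split.
- split.
  + move=> i j1 j2 j3 a b c [x y z].
    have c' : j3 != j1 by rewrite eq_sym.
    have := lt_trans (lt_trans (hrow _ _ _ a x) (hrow _ _ _ b y)) (hrow _ _ _ c' z).
    by rewrite ltxx.
  + move=> j i1 i2 i3 a b c [x y z].
    have c' : i3 != i1 by rewrite eq_sym.
    have := lt_trans (lt_trans (hcol _ _ _ a x) (hcol _ _ _ b y)) (hcol _ _ _ c' z).
    by rewrite ltxx.
- split.
  + move=> i i' Hii' H; apply: (rowdomC (i := i) (i' := i') Hqq EU) => j.
    by apply: hAC; apply: hcol.
  + move=> j j' Hjj' H; apply: (coldomC (j := j') (j' := j) Hpp EW) => i.
    by apply: hBC; apply: hrow.
- move=> [i j] [/= H1 H2].
  apply: (sinkC (i := i) (j := j) Hpp Hqq Sp Sq EU EW).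
  + move=> i' Hi'; apply: hAC; apply: hcol; [exact: Hi'|exact: H1].
  + move=> j' Hj'; apply: hBC; apply: hrow; [exact: Hj'|exact: H2].
- move=> [i j] [/= H1 H2].
  apply: (sourceC (i := i) (j := j) Hpp Hqq Sp Sq EU EW).
  + move=> i' Hi'; apply: hAC; apply: hcol; [rewrite eq_sym; exact: Hi'|exact: H1].
  + move=> j' Hj'; apply: hBC; apply: hrow; [rewrite eq_sym; exact: Hj'|exact: H2].
- move=> s [Hs [Hc|Hc]].
  + apply: (pot_cycle (F := fun c : cell => C c.1 c.2) Hs).
    apply: sub_cycle Hc => -[i j] [i' j'] /= /orP [/andP [/andP [Hi /eqP Ej]]|/andP [/andP [/eqP Ei Hj]]] /= H.
    * move: Ej Hi => /= Ej Hi; subst j'; apply: hAC; exact: hcol H.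
    * move: Ei Hj => /= Ei Hj; subst i'; apply: hBC; apply: hrow H; by rewrite eq_sym.
  + apply: (pot_cycle (F := fun c : cell => - C c.1 c.2) Hs).
    apply: sub_cycle Hc => -[i j] [i' j'] /= /orP [/andP [/andP [Hi /eqP Ej]]|/andP [/andP [/eqP Ei Hj]]] /= H;
      rewrite ltrN2.
    * move: Ej Hi => /= Ej Hi; subst j'; apply: hAC; apply: hcol H; by rewrite eq_sym.
    * move: Ei Hj => /= Ei Hj; subst i'; apply: hBC; exact: hrow H.
Qed.

End G.
Import Order.TTheory GRing.Theory Num.Theory.
Local Open Scope ring_scope.

Section G2.
Variable R : realType.

Lemma payoffN (p : 'rV[R]_3) (A : 'M[R]_3) q : payoff p (- A) q = - payoff p A q.
Proof. rewrite !payoffE !mxE; ring. Qed.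

Lemma realize_gen (A : 'M[R]_3) (p0 p1 p2 q0 q1 q2 v : R) :
  0 < p0 -> 0 < p1 -> 0 < p2 -> p0 + p1 + p2 = 1 ->
  0 < q0 -> 0 < q1 -> 0 < q2 -> q0 + q1 + q2 = 1 ->
  A o0 o0 * q0 + A o0 o1 * q1 + A o0 o2 * q2 = v ->
  A o1 o0 * q0 + A o1 o1 * q1 + A o1 o2 * q2 = v ->
  A o2 o0 * q0 + A o2 o1 * q1 + A o2 o2 * q2 = v ->
  p0 * A o0 o0 + p1 * A o1 o0 + p2 * A o2 o0 = v ->
  p0 * A o0 o1 + p1 * A o1 o1 + p2 * A o2 o1 = v ->
  p0 * A o0 o2 + p1 * A o1 o2 + p2 * A o2 o2 = v ->
  (forall x0 x1 x2 : R, x0 + x1 + x2 = 1 ->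
     A o0 o0 * x0 + A o0 o1 * x1 + A o0 o2 * x2 = A o1 o0 * x0 + A o1 o1 * x1 + A o1 o2 * x2 ->
     A o1 o0 * x0 + A o1 o1 * x1 + A o1 o2 * x2 = A o2 o0 * x0 + A o2 o1 * x1 + A o2 o2 * x2 ->
     [/\ x0 = q0, x1 = q1 & x2 = q2]) ->
  (forall y0 y1 y2 : R, y0 + y1 + y2 = 1 ->
     y0 * A o0 o0 + y1 * A o1 o0 + y2 * A o2 o0 = y0 * A o0 o1 + y1 * A o1 o1 + y2 * A o2 o1 ->
     y0 * A o0 o1 + y1 * A o1 o1 + y2 * A o2 o1 = y0 * A o0 o2 + y1 * A o1 o2 + y2 * A o2 o2 ->
     [/\ y0 = p0, y1 = p1 & y2 = p2]) ->
  assumption3 A (- A).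
Proof.
move=> hp0 hp1 hp2 Sp hq0 hq1 hq2 Sq R0 R1 R2 K0 K1 K2 Uq Up.
pose pv : 'rV[R]_3 := \row_(j < 3) nth 0 [:: p0; p1; p2] j.
pose qv : 'cV[R]_3 := \col_(i < 3) nth 0 [:: q0; q1; q2] i.
have pvE : [/\ pv 0 o0 = p0, pv 0 o1 = p1 & pv 0 o2 = p2] by rewrite !mxE.
have qvE : [/\ qv o0 0 = q0, qv o1 0 = q1 & qv o2 0 = q2] by rewrite !mxE.
have Ppv : probRow pv.
  split => [j|]; last by rewrite sum3 !mxE.
  by rewrite mxE; ocases j => /=; apply: ltW.
have Pqv : probCol qv.
  split => [i|]; last by rewrite sum3 !mxE.
  by rewrite mxE; ocases i => /=; apply: ltW.
have Aq : forall p', probRow p' -> payoff p' A qv = v.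
  move=> p' /probRow_sum S; rewrite payoffE !mxE /= R0 R1 R2.
  transitivity ((p' 0 o0 + p' 0 o1 + p' 0 o2) * v); first by ring.
  by rewrite S mul1r.
have pA : forall q', probCol q' -> payoff pv A q' = v.
  move=> q' /probCol_sum S; rewrite payoffE !mxE /=.
  transitivity (q' o0 0 * (p0 * A o0 o0 + p1 * A o1 o0 + p2 * A o2 o0) +
                q' o1 0 * (p0 * A o0 o1 + p1 * A o1 o1 + p2 * A o2 o1) +
                q' o2 0 * (p0 * A o0 o2 + p1 * A o1 o2 + p2 * A o2 o2)); first by ring.
  rewrite K0 K1 K2; transitivity ((q' o0 0 + q' o1 0 + q' o2 0) * v); first by ring.
  by rewrite S mul1r.
have Hnash : nash A (- A) pv qv.
  split => //; split => //; split.
  - split => // p' Hp'; by rewrite (Aq _ Hp') (Aq _ Ppv).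
  - split => // q' Hq'; by rewrite !payoffN (pA _ Hq') (pA _ Pqv).
exists pv, qv; split => //.
- by move=> j; rewrite mxE; ocases j.
- by move=> i; rewrite mxE; ocases i.
move=> p' q' [Hp' [Hq' [[_ BA] [_ BB]]]].
have Sp' := probRow_sum Hp'; have Sq' := probCol_sum Hq'.
have z1 : v <= payoff p' A q' by rewrite -(pA _ Hq'); apply: BA.
have z2 : payoff p' A q' <= v.
  have := BB _ Pqv; rewrite !payoffN (Aq _ Hp'); lra.
have rowle : forall i, A i o0 * q' o0 0 + A i o1 * q' o1 0 + A i o2 * q' o2 0 <= v.
  move=> i; rewrite -payoff_erow; apply: le_trans z2; apply: BA; exact: erow_prob.
have colge : forall j, v <= p' 0 o0 * A o0 j + p' 0 o1 * A o1 j + p' 0 o2 * A o2 j.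
  move=> j; rewrite -payoff_ecol; have := BB _ (@ecol_prob R j); rewrite !payoffN; lra.
have Erow : p0 * (A o0 o0 * q' o0 0 + A o0 o1 * q' o1 0 + A o0 o2 * q' o2 0) +
            p1 * (A o1 o0 * q' o0 0 + A o1 o1 * q' o1 0 + A o1 o2 * q' o2 0) +
            p2 * (A o2 o0 * q' o0 0 + A o2 o1 * q' o1 0 + A o2 o2 * q' o2 0) = v.
  by rewrite -(pA _ Hq') payoffE !mxE.
have Ecol : q0 * (- (p' 0 o0 * A o0 o0 + p' 0 o1 * A o1 o0 + p' 0 o2 * A o2 o0)) +
            q1 * (- (p' 0 o0 * A o0 o1 + p' 0 o1 * A o1 o1 + p' 0 o2 * A o2 o1)) +
            q2 * (- (p' 0 o0 * A o0 o2 + p' 0 o1 * A o1 o2 + p' 0 o2 * A o2 o2)) = - v.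
  rewrite -(Aq _ Hp') payoffE !mxE /=; ring.
have [r0 r1 r2] := conv3 hp0 hp1 hp2 Sp (rowle o0) (rowle o1) (rowle o2) Erow.
have cl : forall j, - (p' 0 o0 * A o0 j + p' 0 o1 * A o1 j + p' 0 o2 * A o2 j) <= - v.
  by move=> j; rewrite lerN2.
have [c0 c1 c2] := conv3 hq0 hq1 hq2 Sq (cl o0) (cl o1) (cl o2) Ecol.
have [x0 x1 x2] := Uq _ _ _ Sq' (etrans r0 (esym r1)) (etrans r1 (esym r2)).
have [y0 y1 y2] : [/\ p' 0 o0 = p0, p' 0 o1 = p1 & p' 0 o2 = p2].
  apply: Up => //; lra.
split.
- by apply/rowP => j; rewrite mxE; ocases j.
- by apply/colP => i; rewrite mxE; ocases i.
Qed.

End G2.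
Import Order.TTheory GRing.Theory Num.Theory.
Local Open Scope ring_scope.

Section G3.
Variable R : realType.
Definition Amat (L : seq (seq nat)) : 'M[R]_3 := \matrix_(i < 3, j < 3) (natM L i j)%:R.

Ltac solve_game p0 p1 p2 q0 q1 q2 v :=
  apply: (@realize_gen R _ p0 p1 p2 q0 q1 q2 v); rewrite /Amat ?mxE /natM /=;
  first [ lra | move=> ? ? ? ? ? ?; split; lra ].
Lemma game0 : assumption3 (Amat [:: [:: 9; 6; 2]; [:: 1; 5; 8]; [:: 3; 4; 7]]) (- Amat [:: [:: 9; 6; 2]; [:: 1; 5; 8]; [:: 3; 4; 7]]).
Proof. solve_game (3%:R / 7%:R : R) (5%:R / 21%:R : R) (1%:R / 3%:R : R) (1%:R / 3%:R : R) (4%:R / 21%:R : R) (10%:R / 21%:R : R) (107%:R / 21%:R : R). Qed.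
Lemma game1 : assumption3 (Amat [:: [:: 7; 5; 2]; [:: 1; 6; 9]; [:: 3; 4; 8]]) (- Amat [:: [:: 7; 5; 2]; [:: 1; 6; 9]; [:: 3; 4; 8]]).
Proof. solve_game (17%:R / 31%:R : R) (5%:R / 31%:R : R) (9%:R / 31%:R : R) (13%:R / 31%:R : R) (8%:R / 31%:R : R) (10%:R / 31%:R : R) (151%:R / 31%:R : R). Qed.
Lemma game2 : assumption3 (Amat [:: [:: 6; 3; 1]; [:: 2; 8; 9]; [:: 4; 5; 7]]) (- Amat [:: [:: 6; 3; 1]; [:: 2; 8; 9]; [:: 4; 5; 7]]).
Proof. solve_game (11%:R / 24%:R : R) (1%:R / 6%:R : R) (3%:R / 8%:R : R) (7%:R / 12%:R : R) (1%:R / 3%:R : R) (1%:R / 12%:R : R) (55%:R / 12%:R : R). Qed.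
Lemma game3 : assumption3 (Amat [:: [:: 9; 6; 2]; [:: 3; 4; 8]; [:: 1; 5; 7]]) (- Amat [:: [:: 9; 6; 2]; [:: 3; 4; 8]; [:: 1; 5; 7]]).
Proof. solve_game (7%:R / 16%:R : R) (5%:R / 16%:R : R) (1%:R / 4%:R : R) (1%:R / 8%:R : R) (9%:R / 16%:R : R) (5%:R / 16%:R : R) (41%:R / 8%:R : R). Qed.
Lemma game4 : assumption3 (Amat [:: [:: 8; 5; 2]; [:: 3; 4; 9]; [:: 1; 6; 7]]) (- Amat [:: [:: 8; 5; 2]; [:: 3; 4; 9]; [:: 1; 6; 7]]).
Proof. solve_game (1%:R / 2%:R : R) (1%:R / 4%:R : R) (1%:R / 4%:R : R) (1%:R / 4%:R : R) (1%:R / 2%:R : R) (1%:R / 4%:R : R) (5%:R : R). Qed.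
Lemma game5 : assumption3 (Amat [:: [:: 8; 5; 1]; [:: 2; 4; 9]; [:: 3; 6; 7]]) (- Amat [:: [:: 8; 5; 1]; [:: 2; 4; 9]; [:: 3; 6; 7]]).
Proof. solve_game (13%:R / 29%:R : R) (9%:R / 29%:R : R) (7%:R / 29%:R : R) (14%:R / 29%:R : R) (4%:R / 29%:R : R) (11%:R / 29%:R : R) (143%:R / 29%:R : R). Qed.
Lemma game6 : assumption3 (Amat [:: [:: 6; 4; 3]; [:: 2; 5; 9]; [:: 1; 7; 8]]) (- Amat [:: [:: 6; 4; 3]; [:: 2; 5; 9]; [:: 1; 7; 8]]).
Proof. solve_game (7%:R / 10%:R : R) (2%:R / 15%:R : R) (1%:R / 6%:R : R) (13%:R / 30%:R : R) (1%:R / 3%:R : R) (7%:R / 30%:R : R) (139%:R / 30%:R : R). Qed.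
Lemma game7 : assumption3 (Amat [:: [:: 8; 4; 1]; [:: 2; 5; 9]; [:: 3; 6; 7]]) (- Amat [:: [:: 8; 4; 1]; [:: 2; 5; 9]; [:: 3; 6; 7]]).
Proof. solve_game (3%:R / 7%:R : R) (5%:R / 21%:R : R) (1%:R / 3%:R : R) (10%:R / 21%:R : R) (4%:R / 21%:R : R) (1%:R / 3%:R : R) (103%:R / 21%:R : R). Qed.
Lemma game8 : assumption3 (Amat [:: [:: 6; 7; 2]; [:: 4; 1; 9]; [:: 3; 5; 8]]) (- Amat [:: [:: 6; 7; 2]; [:: 4; 1; 9]; [:: 3; 5; 8]]).
Proof. solve_game (5%:R / 9%:R : R) (13%:R / 45%:R : R) (7%:R / 45%:R : R) (22%:R / 45%:R : R) (1%:R / 5%:R : R) (14%:R / 45%:R : R) (223%:R / 45%:R : R). Qed.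
Lemma game9 : assumption3 (Amat [:: [:: 5; 7; 1]; [:: 6; 3; 9]; [:: 2; 4; 8]]) (- Amat [:: [:: 5; 7; 1]; [:: 6; 3; 9]; [:: 2; 4; 8]]).
Proof. solve_game (12%:R / 25%:R : R) (2%:R / 5%:R : R) (3%:R / 25%:R : R) (2%:R / 25%:R : R) (31%:R / 50%:R : R) (3%:R / 10%:R : R) (126%:R / 25%:R : R). Qed.
Lemma game10 : assumption3 (Amat [:: [:: 5; 6; 2]; [:: 4; 1; 9]; [:: 3; 7; 8]]) (- Amat [:: [:: 5; 6; 2]; [:: 4; 1; 9]; [:: 3; 7; 8]]).
Proof. solve_game (5%:R / 8%:R : R) (17%:R / 56%:R : R) (1%:R / 14%:R : R) (37%:R / 56%:R : R) (1%:R / 7%:R : R) (11%:R / 56%:R : R) (255%:R / 56%:R : R). Qed.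
Lemma game11 : assumption3 (Amat [:: [:: 4; 6; 1]; [:: 5; 2; 9]; [:: 3; 7; 8]]) (- Amat [:: [:: 4; 6; 1]; [:: 5; 2; 9]; [:: 3; 7; 8]]).
Proof. solve_game (31%:R / 54%:R : R) (11%:R / 27%:R : R) (1%:R / 54%:R : R) (2%:R / 3%:R : R) (5%:R / 18%:R : R) (1%:R / 18%:R : R) (79%:R / 18%:R : R). Qed.
Lemma game12 : assumption3 (Amat [:: [:: 17; 18; 13]; [:: 7; 1; 28]; [:: 9; 20; 21]]) (- Amat [:: [:: 17; 18; 13]; [:: 7; 1; 28]; [:: 9; 20; 21]]).
Proof. solve_game (303%:R / 362%:R : R) (28%:R / 181%:R : R) (3%:R / 362%:R : R) (83%:R / 181%:R : R) (20%:R / 181%:R : R) (78%:R / 181%:R : R) (2785%:R / 181%:R : R). Qed.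
Lemma game13 : assumption3 (Amat [:: [:: 5; 8; 2]; [:: 6; 4; 7]; [:: 1; 3; 9]]) (- Amat [:: [:: 5; 8; 2]; [:: 6; 4; 7]; [:: 1; 3; 9]]).
Proof. solve_game (6%:R / 17%:R : R) (10%:R / 17%:R : R) (1%:R / 17%:R : R) (1%:R / 17%:R : R) (9%:R / 17%:R : R) (7%:R / 17%:R : R) (91%:R / 17%:R : R). Qed.
Lemma game14 : assumption3 (Amat [:: [:: 6; 9; 1]; [:: 5; 3; 7]; [:: 2; 4; 8]]) (- Amat [:: [:: 6; 9; 1]; [:: 5; 3; 7]; [:: 2; 4; 8]]).
Proof. solve_game (1%:R / 3%:R : R) (7%:R / 12%:R : R) (1%:R / 12%:R : R) (1%:R / 4%:R : R) (17%:R / 48%:R : R) (19%:R / 48%:R : R) (61%:R / 12%:R : R). Qed.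
Lemma game15 : assumption3 (Amat [:: [:: 5; 9; 2]; [:: 6; 3; 7]; [:: 1; 4; 8]]) (- Amat [:: [:: 5; 9; 2]; [:: 6; 3; 7]; [:: 1; 4; 8]]).
Proof. solve_game (4%:R / 11%:R : R) (37%:R / 66%:R : R) (5%:R / 66%:R : R) (1%:R / 6%:R : R) (13%:R / 33%:R : R) (29%:R / 66%:R : R) (347%:R / 66%:R : R). Qed.
Lemma game16 : assumption3 (Amat [:: [:: 5; 6; 1]; [:: 4; 2; 8]; [:: 3; 7; 9]]) (- Amat [:: [:: 5; 6; 1]; [:: 4; 2; 8]; [:: 3; 7; 9]]).
Proof. solve_game (14%:R / 27%:R : R) (11%:R / 27%:R : R) (2%:R / 27%:R : R) (13%:R / 18%:R : R) (1%:R / 9%:R : R) (1%:R / 6%:R : R) (40%:R / 9%:R : R). Qed.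
Lemma game17 : assumption3 (Amat [:: [:: 4; 7; 2]; [:: 5; 1; 6]; [:: 3; 8; 9]]) (- Amat [:: [:: 4; 7; 2]; [:: 5; 1; 6]; [:: 3; 8; 9]]).
Proof. solve_game (29%:R / 62%:R : R) (14%:R / 31%:R : R) (5%:R / 62%:R : R) (23%:R / 31%:R : R) (11%:R / 62%:R : R) (5%:R / 62%:R : R) (271%:R / 62%:R : R). Qed.
Lemma game18 : assumption3 (Amat [:: [:: 3; 8; 4]; [:: 9; 1; 7]; [:: 2; 5; 6]]) (- Amat [:: [:: 3; 8; 4]; [:: 9; 1; 7]; [:: 2; 5; 6]]).
Proof. solve_game (26%:R / 45%:R : R) (17%:R / 45%:R : R) (2%:R / 45%:R : R) (1%:R / 9%:R : R) (1%:R / 3%:R : R) (5%:R / 9%:R : R) (47%:R / 9%:R : R). Qed.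
Lemma game19 : assumption3 (Amat [:: [:: 7; 14; 8]; [:: 26; 3; 20]; [:: 2; 15; 17]]) (- Amat [:: [:: 7; 14; 8]; [:: 26; 3; 20]; [:: 2; 15; 17]]).
Proof. solve_game (89%:R / 126%:R : R) (46%:R / 189%:R : R) (19%:R / 378%:R : R) (37%:R / 126%:R : R) (11%:R / 18%:R : R) (2%:R / 21%:R : R) (1433%:R / 126%:R : R). Qed.
Lemma game20 : assumption3 (Amat [:: [:: 1; 9; 6]; [:: 7; 4; 5]; [:: 2; 3; 8]]) (- Amat [:: [:: 1; 9; 6]; [:: 7; 4; 5]; [:: 2; 3; 8]]).
Proof. solve_game (4%:R / 15%:R : R) (43%:R / 60%:R : R) (1%:R / 60%:R : R) (4%:R / 15%:R : R) (13%:R / 60%:R : R) (31%:R / 60%:R : R) (319%:R / 60%:R : R). Qed.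
Lemma game21 : assumption3 (Amat [:: [:: 4; 9; 5]; [:: 8; 1; 6]; [:: 2; 3; 7]]) (- Amat [:: [:: 4; 9; 5]; [:: 8; 1; 6]; [:: 2; 3; 7]]).
Proof. solve_game (11%:R / 20%:R : R) (2%:R / 5%:R : R) (1%:R / 20%:R : R) (1%:R / 6%:R : R) (1%:R / 6%:R : R) (2%:R / 3%:R : R) (11%:R / 2%:R : R). Qed.
Lemma game22 : assumption3 (Amat [:: [:: 6; 7; 2]; [:: 9; 1; 5]; [:: 3; 4; 8]]) (- Amat [:: [:: 6; 7; 2]; [:: 9; 1; 5]; [:: 3; 4; 8]]).
Proof. solve_game (4%:R / 9%:R : R) (1%:R / 9%:R : R) (4%:R / 9%:R : R) (1%:R / 3%:R : R) (1%:R / 3%:R : R) (1%:R / 3%:R : R) (5%:R : R). Qed.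
Lemma games_ok L : L \in games -> assumption3 (Amat L) (- Amat L).
Proof.
rewrite /games !inE.
move=> /orP [/eqP->|]; first exact: game0.
move=> /orP [/eqP->|]; first exact: game1.
move=> /orP [/eqP->|]; first exact: game2.
move=> /orP [/eqP->|]; first exact: game3.
move=> /orP [/eqP->|]; first exact: game4.
move=> /orP [/eqP->|]; first exact: game5.
move=> /orP [/eqP->|]; first exact: game6.
move=> /orP [/eqP->|]; first exact: game7.
move=> /orP [/eqP->|]; first exact: game8.
move=> /orP [/eqP->|]; first exact: game9.
move=> /orP [/eqP->|]; first exact: game10.
move=> /orP [/eqP->|]; first exact: game11.
move=> /orP [/eqP->|]; first exact: game12.
move=> /orP [/eqP->|]; first exact: game13.
move=> /orP [/eqP->|]; first exact: game14.
move=> /orP [/eqP->|]; first exact: game15.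
move=> /orP [/eqP->|]; first exact: game16.
move=> /orP [/eqP->|]; first exact: game17.
move=> /orP [/eqP->|]; first exact: game18.
move=> /orP [/eqP->|]; first exact: game19.
move=> /orP [/eqP->|]; first exact: game20.
move=> /orP [/eqP->|]; first exact: game21.
move=> /eqP->; exact: game22.
Qed.
End G3.
Import Order.TTheory GRing.Theory Num.Theory.
Local Open Scope ring_scope.

Section F.
Variable R : realType.

Lemma amat_arrow L c c' : arrow (game_diagram (Amat R L) (- Amat R L)) c c' = natdiag L c c'.
Proof. by rewrite game_arrow !mxE !ltr_nat ltrN2 ltr_nat /natdiag orE' !andE' !eqn'. Qed.

Lemma C5_L L : L \in games ->
  (forall i i' j, i != i' -> natM L i j != natM L i' j) /\
  (forall i j j', j != j' -> natM L i j != natM L i j').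
Proof.
move=> HL; move/allsPs: C5_true => /(_ L HL) H; split.
- move=> i i' j Hii'; move/allsP: H => /(_ i) /allsP /(_ i') /allsP /(_ j).
  by rewrite andE' !orE' eqn' (negbTE Hii') /= => /andP [].
- move=> i j j' Hjj'; move/allsP: H => /(_ j) /allsP /(_ j') /allsP /(_ i).
  by rewrite andE' !orE' eqn' (negbTE Hjj') /= => /andP [].
Qed.

Lemma amat_a1 L : L \in games -> assumption1 (Amat R L) (- Amat R L).
Proof.
move=> /C5_L [H1 H2]; split.
- by move=> i i' j Hii'; rewrite !mxE eqr_nat; apply: H1.
- by move=> i j j' Hjj'; rewrite !mxE eqr_opp eqr_nat; apply: H2.
Qed.

Lemma amat_zs L : zero_sum (Amat R L) (- Amat R L).
Proof. exists 1, 1, (fun _ => 0), (fun _ => 0); split => // i j; rewrite !mxE; ring. Qed.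

Lemma amat_diag L : L \in games ->
  game_diagram (Amat R L) (- Amat R L) = mkD (code (natdiag L)).
Proof.
move=> HL.
have Hd := game_isd (amat_a1 HL).
have E := arrow_ext (amat_arrow L).
have Hi : isdf (natdiag L) by rewrite -E; exact: Hd.
apply/setP => -[c c'].
have := amat_arrow L c c'; rewrite /arrow => ->.
by rewrite inE /= -(dec_code Hi).
Qed.

End F.

End GamePart.
Import GamePart.

Theorem mainTheorem1 (R : realType) :
  (forall D : diagram, is_diagram D ->
     ((exists A B : 'M[R]_3, [/\ assumption1 A B, assumption3 A B, zero_sum A B &
                               comb_equiv (game_diagram A B) D])
      <-> good D))
  /\
  (exists reps : seq diagram,
     [/\ size reps = 23, uniq reps,
         (forall D, D \in reps -> is_diagram D /\ good D),
         (forall D1 D2, D1 \in reps -> D2 \in reps -> comb_equiv D1 D2 -> D1 = D2) &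
         (forall D, is_diagram D -> good D -> exists2 D', D' \in reps & comb_equiv D D')]).
Proof.
split.
- move=> D Hd; split.
  + move=> [A [B [H1 H3 Hz Hc]]].
    exact: (transfer (game_isd H1) (game_good H3 Hz) Hc).
  + move=> Hg; have [r Hr Hc] := complete Hd Hg.
    move/mapP: Hr => [L HL Er]; subst r.
    exists (Amat R L), (- Amat R L)%R; split.
    * exact: amat_a1.
    * exact: games_ok.
    * exact: amat_zs.
    * rewrite amat_diag //; exact: comb_equiv_sym.
- exists [seq mkD r | r <- CombPart.reps]; split.
  + by rewrite size_map.
  + exact: uniq_reps.
  + by move=> D /mapP [r Hr ->]; apply: reps_good.
  + move=> D1 D2 /mapP [r1 H1 ->] /mapP [r2 H2 ->] Hc.
    by rewrite (reps_ineq H1 H2 Hc).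
  + move=> D Hd Hg; have [r Hr Hc] := complete Hd Hg.
    by exists (mkD r) => //; apply: map_f.
Qed.
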